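(* Let $G$ be an $r$-graph on $n$ vertices, let $L>r$ be an integer, and let $0\le k<r$ be the residue of $L$ modulo $r$. If $G$ is $C_L^{(r)}$-hom-free, then one can delete at most $2rL^{-1/r}n^r$ edges from $G$ so that the resulting $r$-graph $G'$ is $\mathscr C_k^{(r)}$-hom-free.
   Context: An $r$-graph is an $r$-uniform hypergraph. For $\ell>r$, the tight cycle $C_\ell^{(r)}$ has vertices $v_1,\dots,v_\ell$ and edges $\{v_i,\dots,v_{i+r-1}\}$, $1\le i\le\ell$ (indices mod $\ell$). A homomorphism $F\to G$ maps $V(F)\to V(G)$ sending each edge of $F$ onto an edge of $G$; $G$ is $F$-hom-free if none exists, and $\mathscr C_k^{(r)}$-hom-free if it is $C_\ell^{(r)}$-hom-free for all $\ell>r$ with $\ell\equiv k\pmod r$. *)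

(* Defs.v *)
From mathcomp Require Import all_boot.
From Stdlib Require Import Reals.
Set Implicit Arguments. Unset Strict Implicit. Unset Printing Implicit Defensive.

Definition is_rgraph (n r : nat) (E : {set {set 'I_n}}) : Prop :=
  forall e, e \in E -> #|e| = r.

(* A homomorphism from the tight cycle C_l^{(r)} (vertices v_0..v_{l-1},
   edges {v_i,...,v_{i+r-1}} indices mod l) into (the r-graph with edge set) E:
   a vertex map f (only its values on 0..l-1 matter) such that the image of
   every edge of the cycle is an edge of E. *)
Definition cycle_hom (n r l : nat) (E : {set {set 'I_n}}) (f : nat -> 'I_n) : Prop :=
  forall i, i < l -> [set f ((i + val j) %% l) | j : 'I_r] \in E.

Definition cycle_hom_free (n r l : nat) (E : {set {set 'I_n}}) : Prop :=
  ~ (exists f : nat -> 'I_n, cycle_hom r l E f).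

Definition cycle_class_hom_free (n r k : nat) (E : {set {set 'I_n}}) : Prop :=
  forall l, r < l -> l %% r = k %% r -> cycle_hom_free r l E.

(* Main.v *)
Require Import Defs.
From mathcomp Require Import all_boot.
From Stdlib Require Import Reals.
Import ssrnat.
From mathcomp Require Import zify.
From Stdlib Require Import Lra Classical.

Set Implicit Arguments. Unset Strict Implicit. Unset Printing Implicit Defensive.


Definition tight (r : nat) {n : nat} (E : {set {set 'I_n}}) (s : seq 'I_n) : Prop :=
  forall p, p + r <= size s -> [set:: take r (drop p s)] \in E.

Definition walk (r : nat) {n : nat} (E : {set {set 'I_n}}) (x y : seq 'I_n) (m : nat) (w : seq 'I_n) : Prop :=
  [/\ tight r E w, size w = m + r.-1, take r.-1 w = x & drop m w = y].

Lemma tight_take r n (E : {set {set 'I_n}}) s k : tight r E s -> tight r E (take k s).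
Proof.
move=> H p; rewrite size_take => Hp.
have Hk : p + r <= k by move: Hp; case: ifP => ?; lia.
have Hs : p + r <= size s by move: Hp; case: ifP => ?; lia.
have := H p Hs.
suff -> : take r (drop p (take k s)) = take r (drop p s) by [].
have -> : drop p (take k s) = take (k - p) (drop p s).
  by rewrite take_drop subnK //; lia.
by rewrite take_takel //; lia.
Qed.

Lemma tight_drop r n (E : {set {set 'I_n}}) s k : 0 < r -> tight r E s -> tight r E (drop k s).
Proof.
move=> Hr H p; rewrite size_drop drop_drop => Hp; apply: H; lia.
Qed.

Lemma tight_sub r n (E E' : {set {set 'I_n}}) s : E' \subset E -> tight r E' s -> tight r E s.
Proof. by move=> /subsetP HE H p Hp; apply: HE; apply: H. Qed.

Lemma drop_join r n (a b : seq 'I_n) m p :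
  m <= p -> size a = m + r.-1 -> r.-1 <= size b -> drop m a = take r.-1 b ->
  drop p (a ++ drop r.-1 b) = drop (p - m) b.
Proof.
move=> Hmp Ha Hb Hab.
rewrite -{1}(subnK Hmp) -drop_drop drop_cat.
have [Hm|Hm] := ltnP m (size a).
- by rewrite Hab cat_take_drop.
- have Hm' : m = size a by lia.
  have Hr : r.-1 = 0 by lia.
  by rewrite Hr -Hm' subnn !drop0.
Qed.

Lemma walk_join r n (E : {set {set 'I_n}}) x y z m m' a b : 0 < r ->
  walk r E x y m a -> walk r E y z m' b -> walk r E x z (m + m') (a ++ drop r.-1 b).
Proof.
move=> Hr; case=> Ta Sa Xa Ya [Tb Sb Xb Zb].
have Hab : drop m a = take r.-1 b by rewrite Ya Xb.
split.
- move=> p; rewrite size_cat size_drop => Hp.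
  have [Hp1|Hp1] : p + r <= size a \/ m <= p by lia.
  + rewrite drop_cat.
    have -> : (p < size a) = true by lia.
    rewrite takel_cat ?size_drop; last by lia.
    exact: Ta.
  + rewrite (@drop_join r _ a b m p Hp1 Sa); [|lia|by []].
    apply: Tb; lia.
- rewrite size_cat size_drop; lia.
- by rewrite takel_cat ?Xa //; lia.
- rewrite (@drop_join r _ a b m (m + m') _ Sa) ?Sb; [by rewrite addKn | lia | lia | by []].
Qed.

Definition st {n} r (w : seq 'I_n) i := take r.-1 (drop i w).

Lemma walk_take r n (E : {set {set 'I_n}}) x y m w i :
  walk r E x y m w -> i <= m -> walk r E x (st r w i) i (take (i + r.-1) w).
Proof.
case=> T S X Y Hi; split.
- exact: tight_take.
- rewrite size_take S; case: ifP => ?; lia.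
- by rewrite take_takel ?X //; lia.
- by rewrite /st take_drop addnC.
Qed.

Lemma walk_drop r n (E : {set {set 'I_n}}) x y m w j : 0 < r ->
  walk r E x y m w -> j <= m -> walk r E (st r w j) y (m - j) (drop j w).
Proof.
move=> Hr; case=> T S X Y Hj; split.
- exact: tight_drop.
- rewrite size_drop S; lia.
- by [].
- by rewrite drop_drop subnK.
Qed.

Lemma window_rot {T : eqType} (e : seq T) p : p <= size e ->
  take (size e) (drop p (e ++ e)) = rot p e.
Proof.
move=> Hp; rewrite drop_cat.
have [Hp1|Hp1] := ltnP p (size e).
- rewrite take_cat size_drop.
  have -> : (size e < size e - p) = false by lia.
  by rewrite /rot; congr (_ ++ take _ _); lia.
- have -> : p = size e by lia.
  by rewrite subnn drop0 take_size rot_size.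
Qed.

Lemma tight_ee r n (E : {set {set 'I_n}}) (e : seq 'I_n) :
  size e = r -> [set:: e] \in E -> tight r E (e ++ e).
Proof.
move=> He HE p; rewrite size_cat => Hp.
rewrite -He window_rot; last by move: Hp; rewrite He; lia.
suff -> : [set:: rot p e] = [set:: e] by [].
by apply/setP => z; rewrite !inE mem_rot.
Qed.

Definition cw (r : nat) {n : nat} (E : {set {set 'I_n}}) (l : nat) (s : seq 'I_n) :=
  exists x, walk r E x x l s.

Lemma walk_edge r n (E : {set {set 'I_n}}) x y m w :
  walk r E x y m w -> 0 < m -> [set:: take r w] \in E.
Proof.
case=> T S _ _ Hm; have := T 0; rewrite drop0; apply; rewrite S; lia.
Qed.

Lemma walk_pad r n (E : {set {set 'I_n}}) x l s : 0 < r -> 0 < l ->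
  walk r E x x l s -> exists s', walk r E x x (r + l) s'.
Proof.
move=> Hr Hl W.
have HE := walk_edge W Hl.
case: (W) => T S X Y.
set e := take r s.
have He : size e = r by rewrite size_take S; case: ifP => ?; lia.
have W1 : walk r E x x r (take (r + r.-1) (e ++ e)).
  split.
  - apply: tight_take; exact: tight_ee.
  - rewrite size_take size_cat He; case: ifP => ?; lia.
  - rewrite take_takel; last by lia.
    rewrite takel_cat; last by lia.
    by rewrite /e take_takel ?X //; lia.
  - rewrite (addnC r r.-1) -take_drop drop_cat He ltnn subnn drop0.
    by rewrite /e take_takel ?X //; lia.
eexists; exact: walk_join Hr W1 W.
Qed.

Lemma walk_padn r n (E : {set {set 'I_n}}) x l s : 0 < r -> 0 < l ->
  walk r E x x l s -> forall c, exists s', walk r E x x (l + c * r) s'.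
Proof.
move=> Hr Hl W c; elim: c => [|c [s' W']]; first by exists s; rewrite addn0.
have [s'' W''] := walk_pad Hr (ltn_addr _ Hl) W'.
by exists s''; rewrite mulSn addnCA.
Qed.

Lemma walk_rev1 r n (E : {set {set 'I_n}}) (e : seq 'I_n) : 0 < r ->
  size e = r -> [set:: e] \in E ->
  walk r E (drop 1 e) (take r.-1 e) r.-1 (take (r.-1 + r.-1) (drop 1 (e ++ e))).
Proof.
move=> Hr He HE; split.
- apply: tight_take; apply: tight_drop => //; exact: tight_ee.
- rewrite size_take size_drop size_cat He; case: ifP => ?; lia.
- rewrite take_takel; last by lia.
  rewrite drop_cat He.
  case: ifP => H1.
  + rewrite takel_cat; last by rewrite size_drop He; lia.
    by rewrite take_oversize // size_drop He; lia.
  + have Hr1 : r = 1 by lia.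
    rewrite Hr1 /= take0 drop_oversize //; rewrite He; lia.
- rewrite -take_drop drop_drop.
  have -> : r.-1 + 1 = size e by rewrite He; lia.
  by rewrite drop_cat ltnn subnn drop0.
Qed.

Lemma walk_rev r n (E : {set {set 'I_n}}) : 0 < r ->
  forall m x y w, walk r E x y m w -> exists w', walk r E y x (r.-1 * m) w'.
Proof.
move=> Hr; elim=> [|m IH] x y w W.
- case: (W) => T S X Y; exists w; rewrite muln0; split => //.
  + by rewrite -Y drop0 take_oversize // S.
  + by rewrite drop0 -X take_oversize // S.
- have W1 := walk_take W (leqnSn m).
  have W2 := walk_drop Hr W (leqnSn m).
  rewrite subSnn in W2.
  have [w1 W1'] := IH _ _ _ W1.
  case: (W2) => T2 S2 X2 Y2.
  have He : size (drop m w) = r by rewrite S2; lia.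
  have HE := walk_edge W2 (ltn0Sn 0).
  rewrite take_oversize in HE; last by rewrite He.
  have R1 := walk_rev1 Hr He HE.
  rewrite Y2 X2 in R1.
  exists (take (r.-1 + r.-1) (drop 1 (drop m w ++ drop m w)) ++ drop r.-1 w1).
  rewrite mulnS; exact: walk_join Hr R1 W1'.
Qed.

Lemma walk_surgery r n (E : {set {set 'I_n}}) x l s i j c w : 0 < r ->
  walk r E x x l s -> i <= j -> j <= l -> walk r E (st r s i) (st r s j) c w ->
  exists s', walk r E x x (i + c + (l - j)) s'.
Proof.
move=> Hr W Hij Hjl Wc.
have W1 := walk_take W (leq_trans Hij Hjl).
have W3 := walk_drop Hr W Hjl.
have W12 := walk_join Hr W1 Wc.
eexists; exact: walk_join Hr W12 W3.
Qed.

Lemma hom_walk r n (E : {set {set 'I_n}}) l f : 0 < r -> 0 < l ->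
  cycle_hom r l E f -> exists s, walk r E (take r.-1 s) (take r.-1 s) l s.
Proof.
move=> Hr Hl H.
set g := fun i => f (i %% l).
exists (map g (iota 0 (l + r.-1))); split => //.
- move=> p; rewrite size_map size_iota => Hp.
  rewrite -map_drop -map_take drop_iota take_iota.
  have -> : minn r (l + r.-1 - p) = r by lia.
  have Hpl : p < l by lia.
  suff -> : [set:: [seq g i | i <- iota (0 + p) r]] = [set f ((p + val j) %% l) | j : 'I_r].
    exact: H.
  apply/setP => z; rewrite inE; apply/mapP/imsetP.
  + case=> i; rewrite mem_iota add0n => /andP [H1 H2] ->.
    have Hj : i - p < r by lia.
    exists (Ordinal Hj) => //=.
    by rewrite /g subnKC.
  + case=> j _ ->; exists (p + val j); last by [].
    rewrite mem_iota add0n; apply/andP; split; [lia|].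
    have Hj : val j < r := ltn_ord j; lia.
- by rewrite size_map size_iota.
- rewrite -map_drop -map_take drop_iota take_iota.
  have -> : minn r.-1 (l + r.-1) = r.-1 by lia.
  have -> : l + r.-1 - l = r.-1 by lia.
  rewrite add0n -(addn0 l) iotaDl -map_comp; apply: eq_map => i /=.
  by rewrite /g modnDl.
Qed.

Lemma walk_hom r n (E : {set {set 'I_n}}) (v0 : 'I_n) x L s : 0 < r -> r < L ->
  walk r E x x L s -> cycle_hom r L E (fun i => nth v0 s i).
Proof.
move=> Hr HL [T S X Y] i Hi.
have Hw : i + r <= size s by rewrite S; lia.
have := T i Hw.
suff -> : [set nth v0 s ((i + val j) %% L) | j : 'I_r] = [set:: take r (drop i s)] by [].
apply/setP => z; rewrite inE; apply/imsetP/idP.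
- case=> [[q Hj]] _ -> /=.
  have -> : nth v0 s ((i + q) %% L) = nth v0 s (i + q).
    have [H1|H1] := ltnP (i + q) L; first by rewrite modn_small.
    have -> : (i + q) %% L = i + q - L.
      rewrite -{1}(subnK H1) modnDr modn_small //; lia.
    have : nth v0 (drop L s) (i + q - L) = nth v0 (take r.-1 s) (i + q - L) by rewrite Y X.
    by rewrite nth_drop nth_take ?subnKC //; lia.
  rewrite -nth_drop -(nth_take v0 Hj); apply: mem_nth.
  rewrite size_take size_drop; move: Hw; set k := size s => Hw; case: ifP => ?; lia.
- move/(nthP v0) => [q]; rewrite size_take size_drop => Hq <-.
  have Hqr : q < r by move: Hq; case: ifP => ?; lia.
  exists (Ordinal Hqr) => //=.
  rewrite nth_take // nth_drop.
  have [H1|H1] := ltnP (i + q) L; first by rewrite modn_small.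
  have -> : (i + q) %% L = i + q - L.
    rewrite -{1}(subnK H1) modnDr modn_small //; lia.
  have : nth v0 (drop L s) (i + q - L) = nth v0 (take r.-1 s) (i + q - L) by rewrite Y X.
  by rewrite nth_drop nth_take ?subnKC //; lia.
Qed.

Definition codeg {n} (E : {set {set 'I_n}}) (S : {set 'I_n}) := #|[set e in E | S \subset e]|.
Definition lst {T : Type} r (y : seq T) := drop (size y - r.-1) y.
Definition good r {n} D (E : {set {set 'I_n}}) :=
  forall S : {set 'I_n}, #|S| = r.-1 -> 0 < codeg E S -> D <= codeg E S.

Lemma edge_split n r (e S : {set 'I_n}) : 0 < r -> #|e| = r -> S \subset e -> #|S| = r.-1 ->
  exists v, e = v |: S.
Proof.
move=> Hr He HS HSc.
have : #|e :\: S| == 1 by rewrite cardsD (setIidPr HS) He HSc; apply/eqP; lia.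
case/cards1P => v Hv; exists v; apply/setP => z.
rewrite !inE; apply/idP/idP.
- move=> Hz; case: (boolP (z \in S)) => HzS; first by rewrite orbT.
  have : z \in e :\: S by rewrite inE HzS Hz.
  by rewrite Hv inE => ->.
- case/orP => [/eqP -> | Hz]; last exact: (subsetP HS).
  have : v \in e :\: S by rewrite Hv inE.
  by rewrite inE => /andP [].
Qed.

Lemma set_rcons n (s : seq 'I_n) v : [set:: rcons s v] = v |: [set:: s].
Proof. by apply/setP => z; rewrite !inE mem_rcons inE. Qed.

Lemma card_set_uniq n (s : seq 'I_n) : uniq s -> #|[set:: s]| = size s.
Proof. by move=> U; rewrite cardsE; apply/card_uniqP. Qed.

Lemma uniq_card_set n (s : seq 'I_n) : #|[set:: s]| = size s -> uniq s.
Proof. by rewrite cardsE => /card_uniqP. Qed.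

Lemma tight_rcons r n (E : {set {set 'I_n}}) y v : 0 < r -> tight r E y -> r.-1 <= size y ->
  v |: [set:: lst r y] \in E -> tight r E (rcons y v).
Proof.
move=> Hr T Hy HE p; rewrite size_rcons => Hp.
have [Hp1|Hp1] : p + r <= size y \/ p = size y - r.-1 by lia.
- rewrite -cats1 drop_cat.
  have -> : (p < size y) = true by lia.
  rewrite takel_cat; first exact: T.
  rewrite size_drop; lia.
- rewrite -cats1 drop_cat.
  have [H1|H1] := ltnP p (size y).
  + rewrite take_oversize; last by rewrite size_cat size_drop /=; lia.
    by rewrite cats1 set_rcons Hp1.
  + have Hr1 : r = 1 by lia.
    have -> : p - size y = 0 by lia.
    rewrite drop0 take_oversize //.
    have -> : [set:: [:: v]] = v |: [set:: lst r y].
      rewrite /lst Hr1 /= subn0 drop_size; apply/setP => z; rewrite !inE ?orbF //.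
    by [].
Qed.

Lemma lst_rcons' n r (y : seq 'I_n) v : 0 < r -> r.-1 <= size y ->
  lst r (rcons y v) = drop 1 (rcons (lst r y) v).
Proof.
move=> Hr Hy; rewrite /lst size_rcons -!cats1.
have -> : (size y).+1 - r.-1 = 1 + (size y - r.-1) by lia.
rewrite -drop_drop; congr (drop 1 _).
rewrite drop_cat; case: ifP => H //.
have -> : size y - r.-1 = size y by move: H; set k := size y; lia.
by rewrite subnn drop0 drop_size.
Qed.

Definition tightb (r : nat) {n : nat} (E : {set {set 'I_n}}) (s : seq 'I_n) : bool :=
  [forall p : 'I_(size s).+1, (p + r <= size s) ==> ([set:: take r (drop p s)] \in E)].

Lemma tightbP r n (E : {set {set 'I_n}}) s : reflect (tight r E s) (tightb r E s).
Proof.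
apply: (iffP forallP) => H.
- move=> p Hp; have Hp' : p < (size s).+1 by lia.
  by have := H (Ordinal Hp') => /implyP; apply.
- move=> p; apply/implyP; exact: H.
Qed.

Lemma ext_count r n (E : {set {set 'I_n}}) D : 0 < r -> is_rgraph r E -> good r D E ->
  forall m y, tight r E y -> r.-1 <= size y -> uniq (lst r y) ->
  (exists e, e \in E /\ [set:: lst r y] \subset e) ->
  D ^ m <= #|[set t : m.-tuple 'I_n | tightb r E (y ++ t)]|.
Proof.
move=> Hr HG Hgood; elim=> [|m IH] y T Hy U [e [He HS]].
- rewrite expn0; apply/card_gt0P; exists [tuple]; rewrite inE cats0; exact/tightbP.
- set S := [set:: lst r y].
  have HSc : #|S| = r.-1 by rewrite card_set_uniq // /lst size_drop; lia.
  have Hcod : 0 < codeg E S by apply/card_gt0P; exists e; rewrite inE He HS.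
  have HD := Hgood S HSc Hcod.
  set V := [set v | v |: S \in E].
  have HV : D <= #|V|.
    apply: (leq_trans HD); apply: (leq_trans _ (leq_imset_card (fun v => v |: S) V)).
    apply: subset_leq_card; apply/subsetP => e'; rewrite inE => /andP [He' HSe'].
    have [v Hv] := edge_split Hr (HG _ He') HSe' HSc.
    by apply/imsetP; exists v => //; rewrite inE -Hv.
  set A := [set t : m.+1.-tuple 'I_n | tightb r E (y ++ t)].
  have step : forall v, v \in V -> D ^ m <= \sum_(t in A | thead t == v) 1.
    move=> v Hv; rewrite sum1dep_card.
    have Hv' : v |: S \in E by move: Hv; rewrite inE.
    have T' := tight_rcons Hr T Hy Hv'.
    have Hy' : r.-1 <= size (rcons y v) by rewrite size_rcons; lia.
    have Hw : #|v |: S| = r := HG _ Hv'.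
    have Hvn : v \notin lst r y.
      apply/negP => Hvl.
      have : v |: S = S by apply/setP => z; rewrite !inE; case: eqP => // ->.
      by move=> HH; move: Hw; rewrite HH HSc; lia.
    have U' : uniq (lst r (rcons y v)).
      by rewrite lst_rcons' //; apply: drop_uniq; rewrite rcons_uniq Hvn U.
    have HS' : [set:: lst r (rcons y v)] \subset v |: S.
      rewrite lst_rcons' //; apply/subsetP => z; rewrite inE => /mem_drop.
      by rewrite mem_rcons !inE.
    have := IH _ T' Hy' U' (ex_intro _ _ (conj Hv' HS')).
    move/leq_trans; apply.
    have Hinj : injective (fun t : m.-tuple 'I_n => [tuple of v :: t]).
      by move=> t1 t2 /(congr1 val) /= [] /val_inj.
    rewrite -(card_imset _ Hinj).
    apply: subset_leq_card; apply/subsetP => t'; case/imsetP => t Ht ->.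
    rewrite !inE theadE eqxx andbT -cat_rcons; move: Ht; by rewrite inE.
  rewrite -sum1_card (partition_big (fun t => thead t) predT) //=.
  rewrite expnS; apply: (leq_trans (leq_mul HV (leqnn _))); rewrite -sum_nat_const.
  apply: (@leq_trans (\sum_(v in V) \sum_(t in A | thead t == v) 1)).
    by apply: leq_sum.
  rewrite [X in _ <= X](bigID (fun v => v \in V)) /=; exact: leq_addr.
Qed.

Definition npos r {n} (E : {set {set 'I_n}}) :=
  #|[set S : {set 'I_n} | (#|S| == r.-1) && (0 < codeg E S)]|.

Lemma codeg_sub n (E1 E : {set {set 'I_n}}) S : E1 \subset E -> codeg E1 S <= codeg E S.
Proof.
move=> H; apply: subset_leq_card; apply/subsetP => e; rewrite !inE => /andP [He ->].
by rewrite (subsetP H).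
Qed.

Lemma prune_aux r n D : forall N (E : {set {set 'I_n}}), #|E| < N ->
  exists E' : {set {set 'I_n}}, [/\ E' \subset E, good r D E' & #|E :\: E'| <= D.-1 * npos r E].
Proof.
elim=> [|N IH] E HN; first by [].
case: (boolP [exists S : {set 'I_n}, [&& #|S| == r.-1, 0 < codeg E S & codeg E S < D]]).
- case/existsP => S /and3P [HS H0 HD].
  set X := [set e in E | S \subset e].
  set E1 := E :\: X.
  have HXE : X \subset E by apply/subsetP => e; rewrite inE => /andP [].
  have HE1 : E1 \subset E by apply: subsetDl.
  have HcE1 : #|E1| < #|E|.
    apply: proper_card; apply/properP; split => //.
    move: H0 => /card_gt0P [e He]; exists e.
    + by move: He; rewrite inE => /andP [].
    + by rewrite inE He.
  have [E' [H1 H2 H3]] := IH E1 (leq_trans HcE1 HN).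
  exists E'; split => //; first exact: subset_trans H1 HE1.
  have Hpos : npos r E1 < npos r E.
    apply: proper_card; apply/properP; split.
    + apply/subsetP => S'; rewrite !inE => /andP [-> /= HS'].
      exact: leq_trans HS' (codeg_sub _ HE1).
    + exists S; first by rewrite inE HS H0.
      rewrite inE HS /= -leqNgt leqn0 /codeg cards_eq0; apply/eqP/setP => e.
      by rewrite !inE; case: (e \in E); case: (S \subset e).
  have HEX : #|E :\: E1| = codeg E S.
    have -> : E :\: E1 = X.
      apply/setP => e; rewrite /E1 /X !inE.
      by case: (e \in E); case: (S \subset e).
    by [].
  have Hsub : E :\: E' \subset (E :\: E1) :|: (E1 :\: E').
    apply/subsetP => e; rewrite !inE.
    by case: (e \in E); case: (S \subset e); case: (e \in E').
  have := subset_leq_card Hsub; rewrite cardsU HEX => Hle.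
  have : codeg E S <= D.-1 by lia.
  move: H3 Hle Hpos; set a := #|E :\: E'|; set b := #|E1 :\: E'|; set c := codeg E S.
  set u := npos r E1; set v := npos r E; nia.
- rewrite negb_exists => /forallP HH; exists E; split => //.
  + move=> S HS H0; have := HH S; rewrite HS eqxx H0 /= -leqNgt; by [].
  + by rewrite setDv cards0.
Qed.

Lemma prune r n D (E : {set {set 'I_n}}) :
  exists E' : {set {set 'I_n}}, [/\ E' \subset E, good r D E' & #|E :\: E'| <= D.-1 * 'C(n, r.-1)].
Proof.
have [E' [H1 H2 H3]] := prune_aux r D (ltnSn #|E|).
exists E'; split => //; apply: (leq_trans H3); apply: leq_mul => //.
rewrite -{2}(card_ord n) -card_draws; apply: subset_leq_card; apply/subsetP => S.
by rewrite !inE => /andP [].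
Qed.

Lemma disj_sum (T : finType) (F : nat -> {set T}) M :
  (forall a b t, a < b < M -> t \in F a -> t \in F b -> False) ->
  \sum_(a < M) #|F a| <= #|T|.
Proof.
move=> H.
suff : \sum_(a < M) #|F a| = #|\bigcup_(a < M) F a| by move=> ->; exact: max_card.
elim: M H => [|M IH] H; first by rewrite !big_ord0 cards0.
rewrite !big_ord_recr /= IH; last by move=> a b t Hab; apply: H; lia.
rewrite cardsU.
suff -> : (\bigcup_(i < M) F i) :&: F M = set0 by rewrite cards0 subn0.
apply/setP => t; rewrite !inE; apply/negP => /andP [/bigcupP [a _ Ha] Hb].
apply: (H a M t) => //; have := ltn_ord a; lia.
Qed.

Lemma st_size r n (s : seq 'I_n) l i : size s = l + r.-1 -> i <= l -> size (st r s i) = r.-1.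
Proof. move=> S Hi; rewrite /st size_take size_drop S; case: ifP => ?; lia. Qed.

Lemma shorten r n (E : {set {set 'I_n}}) D L l s x : 1 < r -> is_rgraph r E -> good r D E ->
  0 < D -> r ^ 2 * n ^ r.-1 <= L * D ^ r.-1 -> L < l -> walk r E x x l s ->
  exists l' s', [/\ 0 < l', l' < l, l' %% r = l %% r & walk r E x x l' s'].
Proof.
move=> Hr HG Hgood HD HL Hl W.
have Hr0 : 0 < r by lia.
case: (W) => T S X Y.
set M := (l.-1 %/ r ^ 2).+1.
have Hr2 : 0 < r ^ 2 by rewrite expn_gt0 Hr0.
have HMl : l <= M * r ^ 2.
  have := ltn_ceil l.-1 Hr2; rewrite -/M; lia.
have Hpos : forall a, a < M -> a * r ^ 2 <= l.-1.
  move=> a Ha; apply: leq_trans (leq_divM l.-1 (r ^ 2)); apply: leq_mul => //; lia.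
set F := fun a => [set t : (r.-1).-tuple 'I_n | tightb r E (st r s (a * r ^ 2) ++ t)].
have HF : forall a, a < M -> D ^ r.-1 <= #|F a|.
  move=> a Ha; have Hi := Hpos a Ha.
  set i := a * r ^ 2 in Hi *.
  have Hsz : size (st r s i) = r.-1 by apply: (st_size S); lia.
  have Hw : i + r <= size s by rewrite S; lia.
  have HE := T i Hw.
  have Hwr : #|[set:: take r (drop i s)]| = r := HG _ HE.
  have Uw : uniq (take r (drop i s)).
    apply: uniq_card_set; rewrite Hwr size_take size_drop; move: Hw; set k := size s => Hw.
    case: ifP => ?; lia.
  have Hlst : lst r (st r s i) = st r s i by rewrite /lst Hsz subnn drop0.
  apply: ext_count => //.
  - rewrite /st; apply: tight_take; exact: tight_drop.
  - by rewrite Hsz.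
  - rewrite Hlst /st -(take_takel _ (leq_pred r)); exact: take_uniq.
  - exists [set:: take r (drop i s)]; split => //; rewrite Hlst /st.
    apply/subsetP => z; rewrite !inE -(take_takel _ (leq_pred r)); exact: mem_take.
have [[a [b [t [Hab [Ha Hb]]]]]|Hno] :=
  Classical_Prop.classic (exists a b t, a < b < M /\ t \in F a /\ t \in F b); last first.
  exfalso.
  have Hsum : \sum_(a < M) #|F a| <= #|{: (r.-1).-tuple 'I_n}|.
    apply: disj_sum => a b t Hab Ha Hb; apply: Hno; by exists a, b, t.
  rewrite card_tuple card_ord in Hsum.
  have : M * D ^ r.-1 <= \sum_(a < M) #|F a|.
    have -> : M * D ^ r.-1 = \sum_(a < M) D ^ r.-1 by rewrite sum_nat_const card_ord.
    apply: leq_sum => a _; apply: HF; exact: ltn_ord.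
  move/leq_trans/(_ Hsum) => HMD.
  have HP : 0 < D ^ r.-1 by rewrite expn_gt0 HD.
  move: HMD HL Hl HMl HP; set P := D ^ r.-1; set Q := n ^ r.-1; set R := r ^ 2 => H1 H2 H3 H4 H5.
  have H6 := leq_mul H4 (leqnn P).
  have H7 := leq_mul (leqnn R) H1.
  have H8 : L * P < l * P by rewrite ltn_mul2r H5 H3.
  nia.
case/andP: Hab => Hab HbM.
have Hj := Hpos b HbM.
have Hi := Hpos a (ltn_trans Hab HbM).
set i := a * r ^ 2 in Hi Ha *.
set j := b * r ^ 2 in Hj Hb *.
have Hij : i + r ^ 2 <= j by rewrite /i /j; have := leq_mul Hab (leqnn (r ^ 2)); rewrite mulSn; lia.
have Hsi : size (st r s i) = r.-1 by apply: (st_size S); lia.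
have Hsj : size (st r s j) = r.-1 by apply: (st_size S); lia.
have Wy : forall y : seq 'I_n, size y = r.-1 -> tightb r E (y ++ t) -> walk r E y t r.-1 (y ++ t).
  move=> y Hy Ht; split.
  - exact/tightbP.
  - by rewrite size_cat Hy size_tuple.
  - by rewrite takel_cat ?Hy // take_oversize ?Hy.
  - by rewrite drop_cat Hy ltnn subnn drop0.
move: Ha Hb; rewrite !inE => Ha Hb.
have W1 := Wy _ Hsi Ha.
have [w2 W2] := walk_rev Hr0 (Wy _ Hsj Hb).
have W12 := walk_join Hr0 W1 W2.
have Hij' : i <= j by lia.
have Hjl : j <= l by lia.
have [s' W'] := walk_surgery Hr0 W Hij' Hjl W12.
exists (i + (r.-1 + r.-1 * r.-1) + (l - j)), s'; split => //.
- have : 0 < r.-1 by lia.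
  lia.
- have H2 : r.-1 + r.-1 * r.-1 < r ^ 2 by rewrite -mulnS prednK // expnS expn1 ltn_mul2r Hr0 /=; lia.
  move: Hij Hj H2; set u := r.-1 + r.-1 * r.-1; set R := r ^ 2 => Hij Hj H2.
  have : 0 < l by lia.
  lia.
- have Hji : j = i + (b - a) * r ^ 2 by rewrite /i /j -mulnDl subnKC // ltnW.
  have Hq : l = ((b - a) * r - r.-1) * r + (i + (r.-1 + r.-1 * r.-1) + (l - j)).
    have Hc : 0 < b - a by lia.
    move: Hji Hjl Hc; rewrite expnS expn1; set c := b - a.
    have Hrr : r = r.-1.+1 by rewrite prednK.
    move: Hrr; set q := r.-1 => Hrr; rewrite Hrr.
    move=> Hji Hjl Hc.
    have H1 : q <= c * q.+1 by apply: leq_trans (leqnSn q) (leq_pmull _ Hc).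
    have H2 := leq_mul H1 (leqnn q.+1).
    rewrite mulnBl -mulnS mulnA in Hji *.
    move: H2 Hji Hjl; set XX := c * q.+1 * q.+1; set YY := q * q.+1 => H2 Hji Hjl.
    lia.
  by rewrite [in RHS]Hq modnMDl.
Qed.



Lemma INR_muln a b : INR (a * b)%N = (INR a * INR b)%R.
Proof. exact: mult_INR. Qed.

Lemma INR_expn a k : INR (a ^ k)%N = (INR a ^ k)%R.
Proof. elim: k => [|k IH]; first by []. by rewrite expnS INR_muln IH. Qed.

Lemma INR_leq a b : (a <= b)%N -> (INR a <= INR b)%R.
Proof. by move/leP; apply: le_INR. Qed.

Lemma INR_ltn a b : (a < b)%N -> (INR a < INR b)%R.
Proof. by move/ltP; apply: lt_INR. Qed.

Arguments INR_leq {a b}. Arguments INR_ltn {a b}.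

Lemma fact_bound r : (1 < r)%N -> (r ^ 2 <= (2 * r`!) ^ r.-1)%N.
Proof.
case: r => [|[|q]] // _.
have H1 : (q.+2 ^ 2 <= 2 * (q.+2)`!)%N.
  rewrite !factS expnS expn1.
  have := fact_gt0 q; set f := q`! => Hf.
  have : (q.+2 * q.+1 <= q.+2 * q.+1 * f)%N by rewrite leq_pmulr.
  nia.
apply: (leq_trans H1); rewrite /= expnS; apply: leq_pmulr.
by rewrite expn_gt0 muln_gt0 fact_gt0.
Qed.

Lemma real_bound (r n L d C : nat) : (1 < r)%N -> (0 < L)%N ->
  (L * d ^ r.-1 < r ^ 2 * n ^ r.-1)%N -> (C * (r.-1)`! <= n ^ r.-1)%N ->
  (INR (d * C) <= 2 * INR r * Rpower (INR L) (- (1 / INR r)) * INR n ^ r)%R.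
Proof.
move=> Hr HL Hd HC.
set Lr := INR L; set R := INR r; set N := INR n; set a := Rpower Lr (- (1 / R)).
have HLr : (1 <= Lr)%R by rewrite /Lr -[1%R]/(INR 1); apply: INR_leq.
have HR : (0 < R)%R by apply: lt_0_INR; apply/ltP; lia.
have Ha : (0 < a)%R by rewrite /a /Rpower; apply: exp_pos.
have HN : (0 <= N)%R by apply: pos_INR.
have Hrr : r = r.-1.+1 by lia.
have HRm : INR r.-1 = (R - 1)%R by rewrite /R [in RHS]Hrr S_INR; lra.
have Hkey : (1 <= Lr * a ^ r.-1)%R.
  rewrite /a -Rpower_pow // Rpower_mult -{1}(Rpower_1 Lr); last lra.
  rewrite -Rpower_plus.
  apply: (Rle_trans _ (Rpower Lr 0)); first by rewrite Rpower_O; lra.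
  apply: Rle_Rpower => //; rewrite HRm.
  have -> : (1 + - (1 / R) * (R - 1) = 1 / R)%R by field; lra.
  apply: Rlt_le; apply: Rdiv_lt_0_compat; lra.
set K := INR (r`!).
set z := (2 * K * a * N)%R.
have HK : (0 < K)%R by apply: lt_0_INR; apply/ltP; exact: fact_gt0.
have Hz0 : (0 <= z)%R.
  rewrite /z; repeat apply: Rmult_le_pos; lra.
have Hyz : (INR d <= z)%R.
  case: (Rle_lt_dec (INR d) z) => // Hlt; exfalso.
  have H1 := pow_incr z (INR d) r.-1 (conj Hz0 (Rlt_le _ _ Hlt)).
  have H2 := INR_ltn Hd; rewrite !INR_muln !INR_expn -/Lr -/N in H2.
  have H3 := INR_leq (fact_bound Hr); rewrite !INR_expn INR_muln -/R -/K in H3.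
  rewrite -/R in H2.
  have H4 : (z ^ r.-1 = a ^ r.-1 * ((INR 2 * K) ^ r.-1 * N ^ r.-1))%R.
    rewrite /z -!Rpow_mult_distr; congr (_ ^ _)%R; rewrite /= ; ring.
  rewrite H4 in H1.
  have HP : (0 <= N ^ r.-1)%R by apply: pow_le.
  have HQ : (0 <= a ^ r.-1)%R by apply: pow_le; lra.
  set P := (N ^ r.-1)%R in H1 H2 H4 HP.
  set Q := (a ^ r.-1)%R in Hkey H1 H4 HQ.
  set U := ((INR 2 * K) ^ r.-1)%R in H1 H3 H4.
  set V := (INR d ^ r.-1)%R in H1 H2.
  have H5 : (R * R * P <= U * P)%R by apply: Rmult_le_compat_r => //; move: H3; rewrite /= Rmult_1_r.
  have H6 : (Lr * (Q * (U * P)) <= Lr * V)%R by apply: Rmult_le_compat_l; lra.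
  have H7 : (U * P <= Lr * Q * (U * P))%R.
    rewrite -{1}(Rmult_1_l (U * P)); apply: Rmult_le_compat_r => //.
    have HU : (0 <= U)%R by rewrite /U; apply: pow_le; apply: Rmult_le_pos; [apply: pos_INR | lra].
    apply: Rmult_le_pos => //; exact: Rmult_le_pos.
  lra.
have HCr : (INR C * INR (r.-1)`! <= N ^ r.-1)%R.
  by have := INR_leq HC; rewrite INR_muln INR_expn.
have HKe : K = (R * INR (r.-1)`!)%R by rewrite /K /R {1}Hrr factS INR_muln -Hrr.
rewrite INR_muln.
apply: (Rle_trans _ (z * INR C)%R).
  apply: Rmult_le_compat_r => //; exact: pos_INR.
rewrite /z HKe {2}Hrr /=.
have HC0 : (0 <= INR C)%R by apply: pos_INR.
set F := INR (r.-1)`! in HCr HKe *.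
set P := (N ^ r.-1)%R in HCr *.
have : (2 * R * a * N * (INR C * F) <= 2 * R * a * N * P)%R.
  apply: Rmult_le_compat_l => //; repeat apply: Rmult_le_pos; lra.
lra.
Qed.


Lemma walk_edge_cycle r n (E : {set {set 'I_n}}) (e : seq 'I_n) : 0 < r ->
  size e = r -> [set:: e] \in E ->
  walk r E (take r.-1 e) (take r.-1 e) r (take (r + r.-1) (e ++ e)).
Proof.
move=> Hr He HE; split.
- apply: tight_take; exact: tight_ee.
- rewrite size_take size_cat He; case: ifP => ?; lia.
- rewrite take_takel; last by lia.
  by rewrite takel_cat //; lia.
- by rewrite (addnC r r.-1) -take_drop drop_cat He ltnn subnn drop0.
Qed.

Lemma no_cycle r n (E E' : {set {set 'I_n}}) D L (v0 : 'I_n) : 1 < r -> r < L ->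
  is_rgraph r E' -> good r D E' -> 0 < D -> r ^ 2 * n ^ r.-1 <= L * D ^ r.-1 ->
  E' \subset E -> cycle_hom_free r L E ->
  forall l s x, 0 < l -> l %% r = L %% r -> walk r E' x x l s -> False.
Proof.
move=> Hr HrL HG Hgood HD HDL Hsub Hfree l.
have Hr0 : 0 < r by lia.
elim: l.+1 {-2}l (ltnSn l) => // N IH {}l Hl s x Hl0 Hmod W.
have [HlL|HlL] := leqP l L.
- have Hdvd : r %| L - l by rewrite -eqn_mod_dvd // Hmod.
  have [s' W'] := walk_padn Hr0 Hl0 W ((L - l) %/ r).
  rewrite divnK // subnKC // in W'.
  case: W' => T S X Y.
  have W'' : walk r E x x L s' by split => //; exact: tight_sub Hsub T.
  apply: Hfree; exists (fun i => nth v0 s' i); exact: walk_hom Hr0 HrL W''.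
- have [l' [s' [Hl'0 Hl'l Hmod' W']]] := shorten Hr HG Hgood HD HDL HlL W.
  apply: (IH l' _ s' x Hl'0 _ W'); [lia | by rewrite Hmod'].
Qed.

Lemma ffact_le n k : n ^_ k <= n ^ k.
Proof.
elim: k => // k IH; rewrite ffactnSr expnSr; apply: leq_mul IH (leq_subr _ _).
Qed.

Lemma rhs_nonneg r n L : (0 <= 2 * INR r * Rpower (INR L) (- (1 / INR r)) * INR n ^ r)%R.
Proof.
apply: Rmult_le_pos; last by apply: pow_le; apply: pos_INR.
apply: Rmult_le_pos; last by rewrite /Rpower; apply: Rlt_le; apply: exp_pos.
apply: Rmult_le_pos; [lra | apply: pos_INR].
Qed.

Unset Implicit Arguments.

Theorem corollary4p2 (r n L : nat) (E : {set {set 'I_n}}) :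
  0 < r -> is_rgraph r E -> r < L -> cycle_hom_free r L E ->
  exists E' : {set {set 'I_n}},
    E' \subset E /\
    (INR #|E :\: E'| <= 2 * INR r * Rpower (INR L) (- (1 / INR r)) * INR n ^ r)%R /\
    cycle_class_hom_free r (L %% r) E'.
Proof.
move=> Hr HG HL Hfree.
case: n E HG Hfree => [|n'] E HG Hfree.
  exists E; split; first exact: subxx.
  split; first by rewrite setDv cards0; exact: rhs_nonneg.
  move=> l Hl Hmod [f Hf].
  by case: (f 0).
set v0 : 'I_n'.+1 := ord0.
have Hr0 := Hr.
case Hk: (L %% r == 0).
  have HE0 : E = set0.
    apply/setP => e; rewrite inE; apply/negP => He.
    have Hsz := HG e He.
    set s0 := enum e.
    have Hs0 : size s0 = r by rewrite /s0 -cardE.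
    have Hs0E : [set:: s0] \in E.
      suff -> : [set:: s0] = e by [].
      by apply/setP => z; rewrite inE mem_enum.
    have W := walk_edge_cycle Hr Hs0 Hs0E.
    have [s' W'] := walk_padn Hr (Hr) W (L %/ r).-1.
    have HLr : r + (L %/ r).-1 * r = L.
      have H1 : 0 < L %/ r by rewrite divn_gt0 //; lia.
      rewrite -mulSn prednK //; exact: divnK.
    rewrite HLr in W'.
    apply: Hfree; exists (fun i => nth v0 s' i); exact: walk_hom Hr HL W'.
  exists E; split; first exact: subxx.
  split; first by rewrite setDv cards0; exact: rhs_nonneg.
  move=> l Hl Hmod [f Hf].
  have := Hf 0 (ltn_trans Hr Hl); by rewrite HE0 inE.
have Hr2 : 1 < r.
  case: r Hr HG Hfree HL Hk Hr0 => [|[|r]] //.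
  by rewrite modn1.
have Hex : exists D, r ^ 2 * n'.+1 ^ r.-1 <= L * D ^ r.-1.
  exists (r ^ 2 * n'.+1 ^ r.-1).
  set D := r ^ 2 * n'.+1 ^ r.-1.
  have HD1 : 0 < D by rewrite /D muln_gt0 !expn_gt0 Hr.
  apply: (@leq_trans (D ^ r.-1)).
    rewrite -{1}(expn1 D); apply: leq_pexp2l => //; lia.
  apply: leq_pmull; lia.
case: (ex_minnP Hex) => D HDP Hmin.
have HD0 : 0 < D.
  case: D HDP Hmin => [|D] // HDP _.
  move: HDP; rewrite exp0n; last by lia.
  rewrite muln0 leqn0 muln_eq0 !expn_eq0; lia.
have Hlt : L * (D.-1) ^ r.-1 < r ^ 2 * n'.+1 ^ r.-1.
  rewrite ltnNge; apply/negP => H; have := Hmin _ H; lia.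
have [E' [Hsub Hgood Hcard]] := prune r D E.
exists E'; split => //; split.
- apply: Rle_trans (INR_leq Hcard) _.
  apply: real_bound => //; first by lia.
  rewrite bin_ffact; exact: ffact_le.
- move=> l Hl Hmod [f Hf].
  have [s W] := hom_walk Hr (ltn_trans Hr Hl) Hf.
  have HG' : is_rgraph r E' by move=> e He; apply: HG; exact: (subsetP Hsub).
  apply: (no_cycle v0 Hr2 HL HG' Hgood HD0 HDP Hsub Hfree (ltn_trans Hr Hl) _ W).
  by rewrite Hmod modn_mod.
Qed.
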